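(* Let $T(\mathrm{GL}_r(q))$ denote, uniformly for all $r$, one of: the scalar matrices $Z(\mathrm{GL}_r(q))$, the diagonal matrices $D(\mathrm{GL}_r(q))$, or the upper-triangular matrices $RT(\mathrm{GL}_r(q))$. Let $n=mk$, $H_1\le\mathrm{GL}_m(q)$ and $H\le H_1\wr\mathrm{Sym}(k)\le\mathrm{GL}_n(q)$. If there exist $g_1,\dots,g_b\in\mathrm{GL}_m(q)$ (respectively $\mathrm{SL}_m(q)$) such that $H_1\cap H_1^{g_1}\cap\dots\cap H_1^{g_b}\le T(\mathrm{GL}_m(q))$, then there exist $x_1,\dots,x_b\in\mathrm{GL}_n(q)$ (respectively $\mathrm{SL}_n(q)$) such that $H\cap H^{x_1}\cap\dots\cap H^{x_b}\le T(\mathrm{GL}_n(q))$.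
   Context: $H_1\wr\mathrm{Sym}(k)$ is the matrix group obtained from the $k\times k$ permutation matrices by replacing each entry $1$ by an arbitrary matrix of $H_1$ and each entry $0$ by the zero $m\times m$ matrix. $H^x=x^{-1}Hx$. *)

(* Defs.v *)
From HB Require Import structures.
From mathcomp Require Import all_boot all_order all_algebra all_fingroup.
Set Implicit Arguments. Unset Strict Implicit. Unset Printing Implicit Defensive.
Import GRing.Theory.
Local Open Scope ring_scope.
Local Open Scope group_scope.

(* Entries of a square matrix of size p.+1 addressed by natural-number indices
   (0-based; used only with in-range indices). *)
Definition mxentry (F : nzRingType) (p : nat) (A : 'M[F]_p.+1) (i j : nat) : F :=
  A (inord i) (inord j).

Inductive Tkind := TScalar | TDiagonal | TUpperTri.

Definition Tset (F : finFieldType) (tk : Tkind) (n : nat) : {set {'GL_n[F]}} :=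
  match tk with
  | TScalar => [set x : {'GL_n[F]} | is_scalar_mx (GLval x)]
  | TDiagonal => [set x : {'GL_n[F]} | is_diag_mx (GLval x)]
  | TUpperTri => [set x : {'GL_n[F]} | is_trig_mx (GLval x)^T]
  end.

Definition SLset (F : finFieldType) (n : nat) : {set {'GL_n[F]}} :=
  [set x : {'GL_n[F]} | \det (GLval x) == 1%R].

Definition Amb (F : finFieldType) (sl : bool) (n : nat) : {set {'GL_n[F]}} :=
  if sl then SLset F n else [set: {'GL_n[F]}].

(* H1 wr Sym(k) inside GL_n(F), for n = k*m: block (a,b) of size m x m
   (rows a*m.., columns b*m..) is h a if b = s a and zero otherwise. *)
Definition wreath (F : finFieldType) (m n k : nat) (H1 : {set {'GL_m[F]}})
  : {set {'GL_n[F]}} :=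
  [set x : {'GL_n[F]} |
    [exists s : {perm 'I_k}, exists h : {ffun 'I_k -> {'GL_m[F]}},
      [forall a, h a \in H1] &&
      [forall a : 'I_k, forall b : 'I_k, forall u : 'I_m, forall v : 'I_m,
         mxentry (GLval x) (a * m + u)%N (b * m + v)%N ==
         (if b == s a then mxentry (GLval (h a)) u v else 0%R)]]].

(* Main.v *)
Require Import Defs.
From HB Require Import structures.
From mathcomp Require Import all_boot all_order all_algebra all_fingroup.
From mathcomp Require Import zify.

Module Helpers.
Set Implicit Arguments. Unset Strict Implicit. Unset Printing Implicit Defensive.
Import GRing.Theory.
Local Open Scope ring_scope.

Lemma sum_decomp (R : nmodType) (m k : nat) (f : nat -> R) :
  (\sum_(0 <= l < k * m) f l = \sum_(a < k) \sum_(u < m) f (a * m + u)%N)%R.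
Proof.
elim: k => [|k IH]; first by rewrite mul0n big_geq // big_ord0.
rewrite big_ord_recr /= -IH (@big_cat_nat _ _ _ (k * m)) //=; last by rewrite mulSn leq_addl.
congr (_ + _)%R.
rewrite -{1}[(k * m)%N]add0n big_addn mulSn addnK big_mkord.
by apply: eq_bigr => i _; rewrite addnC.
Qed.

Lemma det_blk (R : comNzRingType) (m : nat) (f : nat -> nat -> R)
  (Hs : forall i j, f (m + i)%N (m + j)%N = f i j)
  (Hz : forall i j, (j < m)%N -> f (m + i)%N j = 0%R) k :
  \det (\matrix_(i < k * m, j < k * m) f i j) = (\det (\matrix_(i < m, j < m) f i j)) ^+ k.
Proof.
elim: k => [|k IH]; first by rewrite det_mx00 expr0.
change (k.+1 * m)%N with (m + k * m)%N.
set A := \matrix_(i < m + k * m, j < m + k * m) f i j.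
rewrite -[A]submxK.
have -> : dlsubmx A = 0 by apply/matrixP => i j; rewrite !mxE /= Hz.
have -> : ulsubmx A = \matrix_(i < m, j < m) f i j by apply/matrixP => i j; rewrite !mxE.
have -> : drsubmx A = \matrix_(i < k * m, j < k * m) f i j by apply/matrixP => i j; rewrite !mxE /= Hs.
by rewrite det_ublock exprS IH.
Qed.

Lemma perm_trivial k (s t : {perm 'I_k}) :
  (forall a c : 'I_k, (a <= (s^-1)%g c)%N = (t a <= c)%N) ->
  (forall a, t a = a) /\ (forall c, s c = c).
Proof.
move=> H.
have ht : forall a, t a = a.
  pose f (b : 'I_k) := #|[set c : 'I_k | (b <= c)%N]|.
  have lt_f : forall b1 b2 : 'I_k, (b1 < b2)%N -> (f b2 < f b1)%N.
    move=> b1 b2 lt12; apply: proper_card; apply/properP; split.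
      by apply/subsetP => c; rewrite !inE => h; apply: leq_trans h; apply: ltnW.
    by exists b1; rewrite !inE ?leqnn // -ltnNge.
  have f_inj : injective f.
    move=> b1 b2 e; apply/val_inj/eqP; case: ltngtP => // lt.
      by have := lt_f _ _ lt; rewrite e ltnn.
    by have := lt_f _ _ lt; rewrite e ltnn.
  move=> a; apply: f_inj; rewrite /f.
  have -> : [set c : 'I_k | (t a <= c)%N] = (s^-1)%g @^-1: [set c : 'I_k | (a <= c)%N].
    by apply/setP => c; rewrite !inE H.
  by rewrite card_preimset //; apply: perm_inj.
split => // c.
have e : (s^-1)%g c = c.
  apply/val_inj/eqP; rewrite eqn_leq; apply/andP; split.
    by have := H ((s^-1)%g c) c; rewrite ht leqnn => <-.
  by have := H c c; rewrite ht leqnn.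
by rewrite -{1}e permKV.
Qed.


Section S.
Variables (F : finFieldType) (m' k N : nat).
Local Notation m := m'.+1.
Hypothesis hN : N.+1 = (k * m)%N.

Lemma idx_lt (a : 'I_k) (u : 'I_m) : (a * m + u < N.+1)%N.
Proof. rewrite hN; have := ltn_ord a; have := ltn_ord u; nia. Qed.

Lemma ent_mul (A B : 'M[F]_N.+1) i j : (i < N.+1)%N -> (j < N.+1)%N ->
  mxentry (A *m B) i j =
  \sum_(a < k) \sum_(u < m) mxentry A i (a * m + u)%N * mxentry B (a * m + u)%N j.
Proof.
move=> hi hj; rewrite /mxentry mxE.
rewrite (eq_bigr (fun l : 'I_N.+1 => A (inord i) (inord l) * B (inord l) (inord j)));
  last by move=> l _; rewrite inord_val.
rewrite -(big_mkord xpredT (fun l => A (inord i) (inord l) * B (inord l) (inord j))).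
have E := sum_decomp m k (fun l => A (inord i) (inord l) * B (inord l) (inord j)).
by rewrite -hN in E; exact E.
Qed.

Lemma divmod_idx (a : 'I_k) (u : 'I_m) :
  ((a * m + u) %/ m = a)%N /\ ((a * m + u) %% m = u)%N.
Proof.
split; first by rewrite divnMDl // divn_small // addn0.
by rewrite modnMDl modn_small.
Qed.

Definition Xf (g : 'M[F]_m) (i j : nat) : F :=
  if (i %/ m <= j %/ m)%N then g (inord (i %% m)) (inord (j %% m)) else 0.

Definition Xm (g : 'M[F]_m) : 'M[F]_N.+1 := \matrix_(i, j) Xf g i j.

Lemma Xm_ent g (a c : 'I_k) (u v : 'I_m) :
  mxentry (Xm g) (a * m + u)%N (c * m + v)%N = if (a <= c)%N then g u v else 0.
Proof.
rewrite /mxentry mxE !inordK ?idx_lt // /Xf.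
have [-> ->] := divmod_idx a u; have [-> ->] := divmod_idx c v.
by rewrite !inord_val.
Qed.

Lemma det_Xm g : \det (Xm g) = \det g ^+ k.
Proof.
rewrite /Xm; move: (N.+1) hN => p ->.
rewrite det_blk.
- congr (\det _ ^+ _); apply/matrixP => i j; rewrite mxE /Xf.
  by rewrite !divn_small // !modn_small // !inord_val.
- by move=> i j; rewrite /Xf !(addnC m) !(divnDr _ (dvdnn m)) divnn !modnDr /= leq_add2r.
- move=> i j hj; rewrite /Xf (divn_small hj) addnC divnDr ?dvdnn // divnn /=.
  by rewrite addn1.
Qed.

Definition blockform (Y : 'M[F]_N.+1) (s : {perm 'I_k}) (hm : 'I_k -> 'M[F]_m) :=
  forall (a b : 'I_k) (u v : 'I_m),
    mxentry Y (a * m + u)%N (b * m + v)%N = if b == s a then hm a u v else 0.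

Lemma block_eq (G : 'M[F]_m) Y Z s t hm km :
  blockform Y s hm -> blockform Z t km -> Xm G *m Y = Z *m Xm G ->
  forall a c : 'I_k,
   (if (a <= (s^-1)%g c)%N then G *m hm ((s^-1)%g c) else 0) =
   (if (t a <= c)%N then km a *m G else 0).
Proof.
move=> hY hZ hE a c; apply/matrixP => u v.
have := congr1 (fun M => mxentry M (a * m + u)%N (c * m + v)%N) hE => /=.
rewrite !ent_mul ?idx_lt //.
under eq_bigr => a' _ do under eq_bigr => u' _ do rewrite Xm_ent hY.
under [in RHS]eq_bigr => a' _ do under eq_bigr => u' _ do rewrite Xm_ent hZ.
rewrite (bigD1 ((s^-1)%g c)) //= [X in _ + X = _]big1 ?addr0; last first.
  move=> a' ha'; apply: big1 => u' _.
  case: eqP => [ec|]; last by rewrite mulr0.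
  by move: ha'; rewrite ec permK eqxx.
rewrite [in RHS](bigD1 (t a)) //= [X in _ = _ + X]big1 ?addr0; last first.
  move=> a' ha'; apply: big1 => u' _.
  by rewrite (negPf ha') mul0r.
rewrite permKV eqxx eqxx => E.
transitivity (\sum_(u' < m) (if (a <= (s^-1)%g c)%N then G u u' else 0) * hm ((s^-1)%g c) u' v).
  case: ifP => _; rewrite !mxE //.
  by symmetry; apply: big1 => *; rewrite mul0r.
rewrite E; case: ifP => _; rewrite !mxE //.
by apply: big1 => *; rewrite mulr0.
Qed.

Lemma Yent (Y : 'M[F]_N.+1) (h0 : 'M[F]_m)
  (hY : forall (a c : 'I_k) (u v : 'I_m),
     mxentry Y (a * m + u)%N (c * m + v)%N = if c == a then h0 u v else 0)
  (i j : 'I_N.+1) :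
  Y i j = if (j %/ m == i %/ m)%N then h0 (inord (i %% m)) (inord (j %% m)) else 0.
Proof.
have hd : forall l : 'I_N.+1, (l %/ m < k)%N.
  by move=> l; rewrite ltn_divLR // -hN.
have hm : forall l : nat, (l %% m < m)%N by move=> l; rewrite ltn_pmod.
have := hY (Ordinal (hd i)) (Ordinal (hd j)) (Ordinal (hm i)) (Ordinal (hm j)).
rewrite /mxentry /= -!divn_eq !inord_val => ->.
have eu : forall l, inord (l %% m) = Ordinal (hm l) :> 'I_m.
  by move=> l; apply/val_inj; rewrite /= inordK.
by rewrite !eu.
Qed.

Lemma inord_mod_eq (i j : nat) :
  (inord (i %% m) == inord (j %% m) :> 'I_m) = (i %% m == j %% m)%N.
Proof. by rewrite -val_eqE /= !inordK ?ltn_pmod. Qed.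

Lemma eq_divmod (i j : nat) :
  (i == j) = ((j %/ m == i %/ m) && (i %% m == j %% m))%N.
Proof.
apply/eqP/andP => [->|[/eqP e1 /eqP e2]]; first by rewrite !eqxx.
by rewrite (divn_eq i m) (divn_eq j m) e1 e2.
Qed.

Lemma Y_scalar (Y : 'M[F]_N.+1) (h0 : 'M[F]_m)
  (hY : forall (a c : 'I_k) (u v : 'I_m),
     mxentry Y (a * m + u)%N (c * m + v)%N = if c == a then h0 u v else 0) : is_scalar_mx h0 -> is_scalar_mx Y.
Proof.
case/is_scalar_mxP => c ec; apply/is_scalar_mxP; exists c.
apply/matrixP => i j; rewrite (@Yent Y h0 hY) ec !mxE.
have -> : (i == j) = (val i == val j) by [].
rewrite (eq_divmod i j); case: ifP => e /=; last by rewrite mulr0n.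
by rewrite inord_mod_eq.
Qed.

Lemma Y_diag (Y : 'M[F]_N.+1) (h0 : 'M[F]_m)
  (hY : forall (a c : 'I_k) (u v : 'I_m),
     mxentry Y (a * m + u)%N (c * m + v)%N = if c == a then h0 u v else 0) : is_diag_mx h0 -> is_diag_mx Y.
Proof.
move/is_diag_mxP => d; apply/is_diag_mxP => i j nij.
rewrite (@Yent Y h0 hY); case: ifP => // e; apply: d.
rewrite !inordK ?ltn_pmod //.
by apply: contra nij; rewrite (eq_divmod i j) e.
Qed.

Lemma Y_trig (Y : 'M[F]_N.+1) (h0 : 'M[F]_m)
  (hY : forall (a c : 'I_k) (u v : 'I_m),
     mxentry Y (a * m + u)%N (c * m + v)%N = if c == a then h0 u v else 0) : is_trig_mx h0^T -> is_trig_mx Y^T.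
Proof.
move/is_trig_mxP => d; apply/is_trig_mxP => i j lij.
rewrite mxE (@Yent Y h0 hY); case: ifP => // /eqP e.
have := d (inord (i %% m)) (inord (j %% m)); rewrite mxE; apply.
rewrite !inordK ?ltn_pmod //.
by move: lij; rewrite {1}(divn_eq i m) {1}(divn_eq j m) e ltn_add2l.
Qed.
End S.


Lemma wreath_block (F : finFieldType) m' k (H1 : {set {'GL_m'.+1[F]}})
  (y : {'GL_(k * m'.+1)[F]}) :
  y \in wreath (k * m'.+1) k H1 ->
  exists s (h : 'I_k -> {'GL_m'.+1[F]}), (forall a, h a \in H1) /\
    blockform (N := (k * m'.+1).-1) (GLval y) s (fun a => GLval (h a)).
Proof.
rewrite inE => /existsP [s /existsP [h /andP [/forallP hH /forallP hE]]].
exists s, h; split => // a b u v.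
move: (hE a) => /forallP /(_ b) /forallP /(_ u) /forallP /(_ v) /eqP ->.
by rewrite /mxentry !inord_val.
Qed.

Lemma GL_neq0 (F : finFieldType) p (w : {'GL_p.+1[F]}) : GLval w != 0%R.
Proof. by apply: contraNneq (GL_det w) => ->; rewrite det0. Qed.

Lemma if_eq_bool (V : zmodType) (P Q : bool) (A B : V) :
  A != 0%R -> B != 0%R -> (if P then A else 0%R) = (if Q then B else 0%R) -> P = Q.
Proof.
move=> hA hB; case: P; case: Q => // E.
  by move: hA; rewrite E eqxx.
by move: hB; rewrite E eqxx.
Qed.


End Helpers.
Import Helpers.
Unset Implicit Arguments.

Local Open Scope group_scope.

Theorem mainTheorem16 (F : finFieldType) (tk : Tkind) (sl : bool) (m k n : nat)
  (Hm : (0 < m)%N) (Hk : (0 < k)%N) (Hn : n = (k * m)%N)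
  (H1 : {group {'GL_m[F]}}) (H : {group {'GL_n[F]}})
  (HH : H \subset wreath n k H1)
  (b : nat) (Hb : (0 < b)%N) (g : 'I_b -> {'GL_m[F]})
  (Hg : forall i, g i \in Amb F sl m)
  (Hbase : H1 :&: \bigcap_(i < b) (H1 :^ g i) \subset Tset F tk m) :
  exists x : 'I_b -> {'GL_n[F]},
    (forall i, x i \in Amb F sl n) /\
    H :&: \bigcap_(i < b) (H :^ x i) \subset Tset F tk n.
Proof.
subst n.
case: m Hm H1 H HH g Hg Hbase => [//|m'] Hm H1 H HH g Hg Hbase.
pose N := (k * m'.+1).-1.
have hN : N.+1 = (k * m'.+1)%N by rewrite /N prednK // muln_gt0 Hk.
have xU : forall i, Xm N (GLval (g i)) \in unitmx.
  by move=> i; rewrite unitmxE (det_Xm hN) GRing.unitrX // -unitmxE; exact: (GL_unitmx (g i)).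
pose x i : {'GL_(k * m'.+1)[F]} := Sub (Xm N (GLval (g i))) (xU i).
have xE : forall i, GLval (x i) = Xm N (GLval (g i)) by [].
exists x; split.
  move=> i; move: (Hg i); rewrite /Amb; case: (sl) => [|_]; last by rewrite inE.
  by rewrite /SLset !inE xE (det_Xm hN) => /eqP ->; rewrite GRing.expr1n.
apply/subsetP => y; rewrite inE => /andP [yH /bigcapP yX].
have [s [h [hH1 hY]]] := wreath_block (subsetP HH y yH).
pose a0 : 'I_k := Ordinal Hk.
have key : forall i, (forall c, s c = c) /\
   exists2 kz, kz \in H1 & forall c, g i * h c = kz * g i.
  move=> i.
  have zin : x i * y * (x i)^-1 \in H.
    by move: (yX i isT); rewrite mem_conjg conjgE invgK mulgA.
  have [t [kk [hkk hZ]]] := wreath_block (subsetP HH _ zin).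
  have E : (Xm N (GLval (g i)) *m GLval y = GLval (x i * y * (x i)^-1) *m Xm N (GLval (g i)))%R.
    by rewrite -!xE -!GL_MxE mulgKV.
  have BE := block_eq hN hY hZ E.
  have Hb' : forall a c : 'I_k, (a <= (s^-1)%g c)%N = (t a <= c)%N.
    move=> a c; apply: (if_eq_bool _ _ (BE a c)).
      exact: (GL_neq0 (g i * h _)).
    exact: (GL_neq0 (kk a * g i)).
  have [ht hs] := perm_trivial Hb'.
  split => //; exists (kk a0) => // c.
  have := BE a0 c; rewrite ht -{1 2}(hs c) permK /= => e.
  apply: val_inj; exact: e.
pose i0 : 'I_b := Ordinal Hb.
have [hs [kz0 _ hk0]] := key i0.
have hc : forall c, h c = h a0.
  by move=> c; apply: (@mulgI _ (g i0)); rewrite !hk0.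
have h0T : h a0 \in Tset F tk m'.+1.
  apply: (subsetP Hbase); rewrite inE hH1 /=; apply/bigcapP => i _.
  have [_ [kz kzH hkz]] := key i.
  by rewrite mem_conjg conjgE invgK mulgA hkz mulgK.
have hY' : forall (a c : 'I_k) (u v : 'I_m'.+1),
   mxentry (GLval y) (a * m'.+1 + u)%N (c * m'.+1 + v)%N =
   if c == a then GLval (h a0) u v else 0%R.
  by move=> a c u v; rewrite hY hs hc.
move: h0T; rewrite /Tset; case: (tk) => /=; rewrite !inE.
- exact: (Y_scalar hN hY').
- exact: (Y_diag hN hY').
- exact: (Y_trig hN hY').
Qed.
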